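(* Let $G\in\Phi$. Then for any two distinct vertices $u_1,u_2$ of $G$, $b(G/u_1u_2)\in\{1,3\}$.
   Context: Graphs are finite, undirected, possibly with loops and parallel edges. A graph is non-separable if it is connected, has no cut-vertex, and either has no loops or has exactly one vertex and one edge; a block is a maximal non-separable subgraph; $b(G)$ is the number of blocks of $G$ with at least one edge. $G/u_1u_2$ is obtained by identifying vertices $u_1,u_2$ (edges joining them become loops); $G/e$ is contraction of edge $e$. $\Phi$ is the set of non-separable graphs $G$ with $|V(G)|\ge 2$ such that: (a') $G-e$ is non-separable for every edge $e$; (b') $b(G/e)$ is even for every edge $e$; (c') whenever $G_1,G_2$ are subgraphs of $G$ with $|E(G_1)|,|E(G_2)|\ge 2$, $V(G_1)\cap V(G_2)=\{u_1,u_2\}$ (distinct), $V(G_1)\cup V(G_2)=V(G)$, $E(G_1)\cap E(G_2)=\emptyset$, $E(G_1)\cup E(G_2)=E(G)$, the integers $b(G_1/u_1u_2)$, $b(G_1)-1$, $b(G_2)$ all have the same parity. *)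

(* Defs.v *)
From mathcomp Require Import all_boot.
Set Implicit Arguments. Unset Strict Implicit. Unset Printing Implicit Defensive.

(* A multigraph whose vertices and edges are drawn from ambient finite types
   V and E: a vertex set, an edge set, and an endpoint map (the pair of ends
   is read as unordered; a loop has equal ends). *)
Record mgraph (V E : finType) := MGraph {
  gV : {set V};
  gE : {set E};
  gend : E -> V * V }.

Section Graphs.
Variables (V E : finType).
Implicit Types (G : mgraph V E) (v x y : V) (e : E).

Definition wfb G : bool :=
  [forall e in gE G, ((gend G e).1 \in gV G) && ((gend G e).2 \in gV G)].

Definition is_loop G e : bool := (gend G e).1 == (gend G e).2.

Definition adjb G : rel V := fun x y =>
  [exists e in gE G, (gend G e == (x, y)) || (gend G e == (y, x))].

Definition connb G : rel V := connect (adjb G).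

Definition connected G : bool :=
  (gV G != set0) && [forall x in gV G, forall y in gV G, connb G x y].

Definition delv G v : mgraph V E :=
  MGraph (gV G :\ v)
         [set e in gE G | ((gend G e).1 != v) && ((gend G e).2 != v)]
         (gend G).

Definition dele G e : mgraph V E := MGraph (gV G) (gE G :\ e) (gend G).

Definition cutv G v : bool :=
  (v \in gV G) &&
  [exists x in gV G :\ v, exists y in gV G :\ v,
     connb G x y && ~~ connb (delv G v) x y].

Definition loopless G : bool := [forall e in gE G, ~~ is_loop G e].

Definition nonsep G : bool :=
  [&& connected G, [forall v, ~~ cutv G v] &
      (loopless G || ((#|gV G| == 1) && (#|gE G| == 1)))].

(* G / u1u2 : identify u1 and u2 (u2 is merged into u1); edges joining them
   become loops *)
Definition idv G (u1 u2 : V) : mgraph V E :=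
  let f := fun x => if x == u2 then u1 else x in
  MGraph (gV G :\ u2) (gE G) (fun e => (f (gend G e).1, f (gend G e).2)).

(* G / e : contraction of edge e (contracting a loop = deleting it) *)
Definition contr G e : mgraph V E :=
  if is_loop G e then dele G e
  else idv (dele G e) (gend G e).1 (gend G e).2.

Definition subg G (p : {set V} * {set E}) : mgraph V E :=
  MGraph p.1 p.2 (gend G).

Definition is_subg G (p : {set V} * {set E}) : bool :=
  [&& p.1 \subset gV G, p.2 \subset gE G & wfb (subg G p)].

Definition is_block G (p : {set V} * {set E}) : bool :=
  [&& is_subg G p, nonsep (subg G p) &
   [forall q : {set V} * {set E},
      [&& is_subg G q, nonsep (subg G q), p.1 \subset q.1 & p.2 \subset q.2]
      ==> (q == p)]].

Definition nblocks G : nat :=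
  #|[set p : {set V} * {set E} | is_block G p && (p.2 != set0)]|.

Definition inPhi G : bool :=
  [&& nonsep G, 2 <= #|gV G|,
   [forall e in gE G, nonsep (dele G e)],
   [forall e in gE G, ~~ odd (nblocks (contr G e))] &
   [forall p1 : {set V} * {set E}, forall p2 : {set V} * {set E},
    forall u1 : V, forall u2 : V,
     [&& is_subg G p1, is_subg G p2, 2 <= #|p1.2|, 2 <= #|p2.2|,
         u1 != u2, p1.1 :&: p2.1 == [set u1; u2],
         p1.1 :|: p2.1 == gV G, p1.2 :&: p2.2 == set0 &
         p1.2 :|: p2.2 == gE G] ==>
     (odd (nblocks (idv (subg G p1) u1 u2)) == ~~ odd (nblocks (subg G p1)))
     && (~~ odd (nblocks (subg G p1)) == odd (nblocks (subg G p2)))]].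

End Graphs.

(* Main.v *)
Require Import Defs.
From mathcomp Require Import all_boot fingraph.
Set Implicit Arguments. Unset Strict Implicit. Unset Printing Implicit Defensive.


Section Generic.
Variables (V E : finType).
Implicit Types (G K : mgraph V E).

Lemma connect_inv (e : rel V) (P : pred V) x y :
  (forall u v, P u -> e u v -> P v) -> P x -> connect e x y -> P y.
Proof.
move=> H Px /connectP [p pth ->]; elim: p x Px pth => //= z p IH x Px /andP[exz pth].
exact: IH (H _ _ Px exz) pth.
Qed.

Lemma adjb_sym K : symmetric (adjb K).
Proof.
move=> x y; apply/existsP/existsP => [] [f /andP[fE H]]; exists f; rewrite fE /=; by rewrite orbC.
Qed.

Lemma connb_sym K x y : connb K x y = connb K y x.
Proof. by rewrite /connb sym_connect_sym //; apply: adjb_sym. Qed.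

Lemma connb_trans K y x z : connb K x y -> connb K y z -> connb K x z.
Proof. exact: connect_trans. Qed.

Lemma adjbP K x y : reflect (exists2 f, f \in gE K & (gend K f == (x, y)) || (gend K f == (y, x))) (adjb K x y).
Proof.
apply: (iffP existsP) => [[f /andP[fE H]]|[f fE H]]; exists f => //; by rewrite fE.
Qed.

Lemma connb_mono K1 K2 x y :
  (forall f, f \in gE K1 -> f \in gE K2) -> (forall f, gend K1 f = gend K2 f) ->
  connb K1 x y -> connb K2 x y.
Proof.
move=> sE sg; apply: connect_sub => u v /adjbP [f fE H]; apply: connect1; apply/adjbP.
by exists f; [apply: sE | rewrite -sg].
Qed.

Lemma connb_hom K1 K2 (h : V -> V) x y :
  (forall u v, adjb K1 u v -> connb K2 (h u) (h v)) ->
  connb K1 x y -> connb K2 (h x) (h y).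
Proof.
move=> H; apply: (@connect_inv _ (fun z => connb K2 (h x) (h z))); last exact: connect0.
move=> u v /= c1 /H; exact: connb_trans.
Qed.

Lemma connect_step (e : rel V) x y : connect e x y -> x != y -> exists z, e x z.
Proof.
move=> /connectP [[|z p] /= pth ->]; first by rewrite eqxx.
by case/andP: pth => exz _ _; exists z.
Qed.

Lemma card_imset_eqrel (T1 T2 : finType) (h1 : E -> T1) (h2 : E -> T2) (S : {set E}) :
  {in S &, forall x y, (h1 x == h1 y) = (h2 x == h2 y)} ->
  #|h1 @: S| = #|h2 @: S|.
Proof.
move=> H; set P := [set (h1 x, h2 x) | x in S].
have e1 : h1 @: S = fst @: P by rewrite -imset_comp.
have e2 : h2 @: S = snd @: P by rewrite -imset_comp.
have i2 : {in P &, injective snd}.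
  move=> p q pP qP; case/imsetP: pP => x xS ->; case/imsetP: qP => y yS -> /= eq2.
  have := H x y xS yS; rewrite eq2 eqxx => /eqP -> //.
have i1 : {in P &, injective fst}.
  move=> p q pP qP; case/imsetP: pP => x xS ->; case/imsetP: qP => y yS -> /= eq1.
  have := H x y xS yS; rewrite eq1 eqxx => /esym/eqP -> //.
by rewrite e1 e2 (card_in_imset i1) (card_in_imset i2).
Qed.

End Generic.


Section BlockLemma.
Variables (V E : finType) (K : mgraph V E) (w : V) (pc : E -> {set V} * {set E}).
Hypothesis A1 : forall e, e \in gE K ->
  [&& is_subg K (pc e), e \in (pc e).2 & w \in (pc e).1].
Hypothesis A2 : forall e, e \in gE K -> nonsep (subg K (pc e)).
Hypothesis A3 : forall e f x, e \in gE K -> f \in gE K ->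
  ((gend K f).1 == x) || ((gend K f).2 == x) -> x \in (pc e).1 -> x != w ->
  f \in (pc e).2.

Lemma subgP G (p : {set V} * {set E}) : is_subg G p ->
  [/\ p.1 \subset gV G, p.2 \subset gE G &
      forall f, f \in p.2 -> ((gend G f).1 \in p.1) && ((gend G f).2 \in p.1)].
Proof.
case/and3P => s1 s2 /forallP wf; split => // f fp; have := wf f; by rewrite fp.
Qed.

Lemma pc_ends e f : e \in gE K -> f \in (pc e).2 ->
  ((gend K f).1 \in (pc e).1) && ((gend K f).2 \in (pc e).1).
Proof. by move=> eK; case/and3P: (A1 eK) => /subgP [_ _ H] _ _; apply: H. Qed.

Lemma closure e (K' : mgraph V E) s z : e \in gE K ->
  (forall f, f \in gE K' -> f \in gE K) -> (forall f, gend K' f = gend K f) ->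
  (forall f, f \in gE K' -> ((gend K f).1 != w) && ((gend K f).2 != w)) ->
  s \in (pc e).1 :\ w -> connb K' s z -> z \in (pc e).1 :\ w.
Proof.
move=> eK sE sg aw; apply: (connect_inv (P := fun x => x \in (pc e).1 :\ w)) => u v /=; rewrite !inE => /andP [uw upc].
case/adjbP => f fE; rewrite sg => H.
have fK := sE _ fE; have := aw _ fE.
have fpc : f \in (pc e).2.
  apply: (A3 (x := u)) => //; case/orP: H => /eqP ->; by rewrite eqxx ?orbT.
have := pc_ends eK fpc.
by case/orP: H => /eqP -> /= /andP [? ?] /andP [? ?]; apply/andP.
Qed.

Lemma Lsub q e : is_subg K q -> nonsep (subg K q) -> e \in q.2 ->
  q.1 \subset (pc e).1 /\ q.2 \subset (pc e).2.
Proof.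
move=> qs; case/subgP: (qs) => q1 q2 qwf.
case/and3P => /andP [_ /forallP conn] /forallP nocut /orP [ll|/andP [c1 c2]] eq.
- have eK : e \in gE K by apply: (subsetP q2).
  case/and3P: (A1 eK) => _ epc wpc.
  have /andP [e1 e2] := pc_ends eK epc.
  have /andP [e1q e2q] := qwf e eq.
  have nl : (gend K e).1 != (gend K e).2.
    by have := forallP ll e; rewrite eq.
  have [s [sS sq]] : exists s, s \in (pc e).1 :\ w /\ s \in q.1.
    case: (eqVneq (gend K e).1 w) => [h1|h1].
    + exists (gend K e).2; rewrite !inE e2 e2q andbT; by rewrite -h1 eq_sym.
    + by exists (gend K e).1; rewrite !inE e1 e1q andbT.
  have V1 : q.1 \subset (pc e).1.
    apply/subsetP => z zq; case: (eqVneq z w) => [->//|zw].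
    have czz : connb (subg K q) s z by have := conn s; rewrite /= sq => /forallP /(_ z); rewrite zq.
    have [wq|wq] := boolP (w \in q.1).
    + have := nocut w; rewrite /cutv /= wq /= negb_exists => /forallP /(_ s).
      rewrite negb_and negb_exists; case/orP => [|/forallP /(_ z)].
        by rewrite !inE sq andbT negbK => /eqP sw; case/setD1P: sS; rewrite sw eqxx.
      rewrite !inE zq zw czz /= negbK => c2.
      have : z \in (pc e).1 :\ w.
        apply: (closure (K' := delv (subg K q) w) eK) sS c2 => //= f; rewrite inE => /andP [fq H].
        + exact: (subsetP q2).
        + exact: H.
      by case/setD1P.
    + have : z \in (pc e).1 :\ w.
        apply: (closure (K' := subg K q) eK) sS czz => //= f fq.
        * exact: (subsetP q2).
        * have /andP [a1 a2] := qwf f fq; apply/andP; split; apply: contraNneq wq => <- //.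
      by case/setD1P.
  split => //; apply/subsetP => f fq.
  have fK : f \in gE K by apply: (subsetP q2).
  have /andP [f1 f2] := qwf f fq.
  have nlf : (gend K f).1 != (gend K f).2 by have := forallP ll f; rewrite fq.
  case: (eqVneq (gend K f).1 w) => [h1|h1].
  + apply: (A3 (x := (gend K f).2)) => //; first by rewrite eqxx orbT.
    * exact: (subsetP V1).
    * by rewrite -h1 eq_sym.
  + apply: (A3 (x := (gend K f).1)) => //; first by rewrite eqxx.
    exact: (subsetP V1).
- have eK : e \in gE K by apply: (subsetP q2).
  case/and3P: (A1 eK) => _ epc wpc.
  have /andP [e1 e2] := pc_ends eK epc.
  have /andP [e1q e2q] := qwf e eq.
  move: c1 c2 => /= /cards1P [x qx] /cards1P [g qg].
  move: eq; rewrite qg inE => /eqP ?; subst g.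
  move: e1q; rewrite qx inE => /eqP hx.
  by split; rewrite sub1set -?hx.
Qed.

Lemma blocks_eq : [set p | is_block K p && (p.2 != set0)] = pc @: gE K.
Proof.
apply/setP => p; rewrite inE; apply/andP/imsetP.
- case => /and3P [ps pn pm] /set0Pn [e ep].
  have eK : e \in gE K by case/subgP: ps => _ s2 _; exact: (subsetP s2).
  exists e => //; have [s1 s2] := Lsub ps pn ep.
  case/and3P: (A1 eK) => ? ? ?.
  have := forallP pm (pc e); rewrite s1 s2 A2 //= andbT => /implyP H.
  by rewrite (eqP (H _)).
- case=> e eK ->; case/and3P: (A1 eK) => ps epc wpc; split; last by apply/set0Pn; exists e.
  apply/and3P; split => //; first exact: A2.
  apply/forallP => q; apply/implyP => /and4P [qs qn s1 s2].
  have [t1 t2] := Lsub qs qn (subsetP s2 _ epc).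
  apply/eqP; rewrite [q]surjective_pairing [pc e]surjective_pairing; congr pair; apply/eqP; by rewrite eqEsubset ?s1 ?s2 ?t1 ?t2.
Qed.

Lemma nblocks_eq : nblocks K = #|pc @: gE K|.
Proof. by rewrite /nblocks blocks_eq. Qed.

End BlockLemma.

Lemma nblocks_one (V E : finType) (K : mgraph V E) :
  wfb K -> nonsep K -> gE K != set0 -> nblocks K = 1.
Proof.
move=> wK nK eK.
have qs : is_subg K (gV K, gE K) by rewrite /is_subg /= !subxx.
have qn : nonsep (subg K (gV K, gE K)) by [].
suff H : [set p | is_block K p && (p.2 != set0)] = [set (gV K, gE K)] by rewrite /nblocks H cards1.
apply/setP => p; rewrite !inE; apply/idP/idP.
- case/andP => /and3P [ps pn /forallP pm] _.
  case/and3P: ps => s1 s2 _.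
  by have := pm (gV K, gE K); rewrite qs qn s1 s2 /= => /eqP ->.
- move/eqP => ->; rewrite eK andbT; apply/and3P; split => //.
  apply/forallP => q; apply/implyP => /and4P [/and3P [t1 t2 _] _ u1 u2].
  apply/eqP; rewrite [q]surjective_pairing; congr pair; apply/eqP; rewrite eqEsubset; by apply/andP.
Qed.


Definition adjO (V E : finType) (G : mgraph V E) (W : {set V}) : rel V :=
  fun x y => [&& adjb G x y, x \notin W & y \notin W].
Definition sv (V E : finType) (G : mgraph V E) (W : {set V}) e :=
  if (gend G e).1 \in W then (gend G e).2 else (gend G e).1.
Definition Cc (V E : finType) (G : mgraph V E) (W : {set V}) e :=
  [set z in gV G | (z \notin W) && connect (adjO G W) (sv G W e) z].
Definition Fc (V E : finType) (G : mgraph V E) (W : {set V}) e :=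
  [set f in gE G | [|| f == e, (gend G f).1 \in Cc G W e | (gend G f).2 \in Cc G W e]].
Definition mrg (V : finType) (a b x : V) := if x == b then a else x.
Definition Gfx (V E : finType) (G : mgraph V E) (W : {set V}) e x :=
  MGraph (gV G) [set g in Fc G W e | ((gend G g).1 != x) && ((gend G g).2 != x)] (gend G).
Definition isend (V E : finType) (G : mgraph V E) f x := ((gend G f).1 == x) || ((gend G f).2 == x).

Definition Pe (V E : finType) (G : mgraph V E) (a b : V) e :=
  MGraph (a |: Cc G [set a; b] e) (Fc G [set a; b] e)
         (fun f => (mrg a b (gend G f).1, mrg a b (gend G f).2)).

Definition US (V E : finType) (G : mgraph V E) (W : {set V}) (S : {set E}) :=
  MGraph (W :|: \bigcup_(f in S) Cc G W f) S (gend G).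

Definition SQ (V E : finType) (G : mgraph V E) (W : {set V}) (Q : {set {set E}}) :=
  [set f in gE G | Fc G W f \in Q].
Definition pQ (V E : finType) (G : mgraph V E) (W : {set V}) (Q : {set {set E}}) :=
  (W :|: \bigcup_(f in SQ G W Q) Cc G W f, SQ G W Q).

Section Bridges.
Variables (V E : finType) (G : mgraph V E) (a b : V).
Hypothesis wfG : wfb G.
Hypothesis nsG : nonsep G.
Hypothesis hab : a != b.
Hypothesis ha : a \in gV G.
Hypothesis hb : b \in gV G.
Local Notation W := [set a; b].
Local Notation C := (Cc G [set a; b]).
Local Notation F := (Fc G [set a; b]).

Lemma wfE f : f \in gE G -> ((gend G f).1 \in gV G) && ((gend G f).2 \in gV G).
Proof. by move=> fE; have := forallP wfG f; rewrite fE. Qed.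

Lemma loopG f : f \in gE G -> (gend G f).1 != (gend G f).2.
Proof.
move=> fE; case/and3P: nsG => _ _ /orP [ll|/andP [c1 _]].
  by have := forallP ll f; rewrite fE.
have : #|[set a; b]| <= #|gV G| by apply: subset_leq_card; rewrite subUset !sub1set ha hb.
by rewrite cards2 hab (eqP c1).
Qed.

Lemma connG x y : x \in gV G -> y \in gV G -> connb G x y.
Proof.
move=> xV yV; case/and3P: nsG => /andP [_ /forallP H] _ _.
by have := H x; rewrite xV => /forallP /(_ y); rewrite yV.
Qed.

Lemma nocutG x y z : x \in gV G -> y \in gV G -> z \in gV G -> y != x -> z != x ->
  connb (delv G x) y z.
Proof.
move=> xV yV zV yx zx; case/and3P: nsG => _ /forallP /(_ x) H _.
move: H; rewrite /cutv xV /= negb_exists => /forallP /(_ y).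
rewrite negb_and !inE yx yV /= negb_exists => /forallP /(_ z).
by rewrite !inE zx zV connG //= negbK.
Qed.

Lemma adjb_ends u v : adjb G u v -> (u \in gV G) && (v \in gV G).
Proof.
case/adjbP => f fE H; have := wfE fE.
by case/orP: H => /eqP -> /= /andP [? ?]; apply/andP.
Qed.

Lemma adjO_sym : symmetric (adjO G W).
Proof. by move=> x y; apply/and3P/and3P => [] [h1 h2 h3]; split => //; rewrite adjb_sym. Qed.

Lemma CP x e : (x \in C e) = [&& x \in gV G, x \notin W & connect (adjO G W) (sv G W e) x].
Proof. by rewrite /Cc in_set. Qed.

Lemma FP f e : (f \in F e) = (f \in gE G) && [|| f == e, (gend G f).1 \in C e | (gend G f).2 \in C e].
Proof. by rewrite /Fc in_set. Qed.

Lemma C_noW x e : x \in C e -> x \notin W.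
Proof. by rewrite CP => /and3P []. Qed.

Lemma C_V x e : x \in C e -> x \in gV G.
Proof. by rewrite CP => /and3P []. Qed.

Lemma C_step u v e : u \in C e -> adjb G u v -> v \notin W -> v \in C e.
Proof.
rewrite !CP => /and3P [uV uW cu] uv vW.
have /andP [_ vV] := adjb_ends uv.
rewrite vV vW /=; apply: connect_trans cu (connect1 _); by rewrite /adjO uv uW vW.
Qed.

Lemma adjb_edge f : f \in gE G -> adjb G (gend G f).1 (gend G f).2.
Proof. by move=> fE; apply/adjbP; exists f => //; rewrite -surjective_pairing eqxx. Qed.

Lemma end_C f x : f \in gE G -> isend G f x -> x \notin W -> x \in C f.
Proof.
move=> fE xf xW; have /andP [e1 e2] := wfE fE.
have xV : x \in gV G by case/orP: xf => /eqP <-.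
rewrite CP xV xW /= /sv.
case: ifP => h1.
  case/orP: xf => /eqP xe; subst x; first by rewrite h1 in xW.
  exact: connect0.
case/orP: xf => /eqP xe; subst x; first exact: connect0.
by apply: connect1; rewrite /adjO h1 xW adjb_edge.
Qed.

Lemma C0_ends e : e \in gE G -> C e = set0 -> ((gend G e).1 \in W) && ((gend G e).2 \in W).
Proof.
move=> eE C0; apply/andP; split; apply: contraT => nW;
  have := end_C eE _ nW; rewrite C0 in_set0; apply; by rewrite /isend eqxx ?orbT.
Qed.

Lemma Fc_edge f e : f \in F e -> f \in gE G.
Proof. by rewrite FP => /andP []. Qed.

Lemma Fc_self e : e \in gE G -> e \in F e.
Proof. by move=> eE; rewrite FP eE eqxx. Qed.

Lemma Fc_ends e f x : e \in gE G -> f \in F e -> isend G f x -> (x \in W) || (x \in C e).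
Proof.
move=> eE; rewrite FP => /andP [fE H] xf.
case: (boolP (x \in W)) => //= xW.
case/or3P: H => [/eqP ef|h|h].
- subst f; exact: end_C.
- case/orP: xf => /eqP xe; subst x => //.
  apply: C_step h _ xW; exact: adjb_edge.
- case/orP: xf => /eqP xe; subst x => //.
  apply: C_step h _ xW; rewrite adjb_sym; exact: adjb_edge.
Qed.

Lemma sv_end e : isend G e (sv G W e).
Proof. by rewrite /sv /isend; case: ifP; rewrite eqxx ?orbT. Qed.

Lemma sv_C e : e \in gE G -> C e != set0 -> sv G W e \in C e.
Proof.
move=> eE /set0Pn [z]; rewrite CP => /and3P [zV zW cz].
case: (boolP (sv G W e \in W)) => [sW|sW]; last exact: end_C (sv_end e) sW.
case/connectP: cz => [[|u p] /= pth zl]; first by rewrite zl sW in zW.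
by case/andP: pth => /and3P [_ /negP].
Qed.

Lemma Fc_C e f : e \in gE G -> C e != set0 ->
  (f \in F e) = (f \in gE G) && (((gend G f).1 \in C e) || ((gend G f).2 \in C e)).
Proof.
move=> eE Cn; rewrite FP; case: (f \in gE G) => //=.
case: eqP => //= ->; have := sv_C eE Cn; have := sv_end e.
by case/orP => /eqP -> ->; rewrite ?orbT.
Qed.

Lemma C_share x e f : x \in C e -> x \in C f -> C e = C f.
Proof.
rewrite !CP => /and3P [_ _ ce] /and3P [_ _ cf].
have ef : connect (adjO G W) (sv G W e) (sv G W f).
  apply: connect_trans ce _; by rewrite sym_connect_sym //; apply: adjO_sym.
apply/setP => z; rewrite !CP; case: (z \in gV G); case: (z \in W) => //=.
apply/idP/idP => h; first by rewrite sym_connect_sym in ef; [apply: connect_trans ef h | apply: adjO_sym].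
exact: connect_trans ef h.
Qed.

Lemma F_share x e f : e \in gE G -> f \in gE G -> x \in C e -> x \in C f -> F e = F f.
Proof.
move=> eE fE xe xf; have ce := C_share xe xf.
have ne : C e != set0 by apply/set0Pn; exists x.
have nf : C f != set0 by apply/set0Pn; exists x.
by apply/setP => g; rewrite Fc_C // Fc_C // ce.
Qed.

Lemma F_class e f : e \in gE G -> f \in F e -> F f = F e /\ C f = C e.
Proof.
move=> eE; rewrite FP => /andP [fE /or3P [/eqP ->//|h|h]].
- have fC : (gend G f).1 \in C f by apply: end_C fE _ (C_noW h); rewrite /isend eqxx.
  by split; [apply: F_share fC h | apply: C_share fC h].
- have fC : (gend G f).2 \in C f by apply: end_C fE _ (C_noW h); rewrite /isend eqxx orbT.
  by split; [apply: F_share fC h | apply: C_share fC h].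
Qed.

Lemma F_inj e f : e \in gE G -> f \in gE G -> F e = F f -> C e = C f.
Proof.
move=> eE fE eq; have := Fc_self eE; rewrite eq => /(F_class fE) [_ ->] //.
Qed.


Lemma RG e x y : e \in gE G -> x \in gV G -> y \in C e -> y != x ->
  exists2 z, z \in W & (z != x) && connb (Gfx G W e x) y z.
Proof.
move=> eE xV yC yx.
set t := if x == a then b else a.
have tW : t \in W by rewrite /t; case: ifP; rewrite !inE eqxx ?orbT.
have tV : t \in gV G by rewrite /t; case: ifP.
have tx : t != x by rewrite /t; case: (eqVneq x a) => [->|xa]; [rewrite eq_sym | rewrite eq_sym].
have yV := C_V yC.
have cyt := nocutG xV yV tV yx tx.
pose adjT := fun u v => (u \notin W) && adjb (delv G x) u v.
have [z zW Rz] : exists2 z, z \in W & connect adjT y z.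
  case: (boolP [exists z in W, connect adjT y z]) => [/existsP [z /andP [zW Rz]]|/existsPn noW].
    by exists z.
  have : connect adjT y t.
    apply: (connect_inv (P := fun v => connect adjT y v) _ (connect0 _ _) cyt) => u v /= Ru uv.
    have uW : u \notin W by apply: contraT; rewrite negbK => uW; have := noW u; rewrite uW Ru.
    by apply: connect_trans Ru (connect1 _); rewrite /adjT uv uW.
  by have := noW t; rewrite tW => /= /negP.
exists z => //.
have : ((z \in W) || (z \in C e)) && (z != x) && connb (Gfx G W e x) y z; last by case/andP => /andP [_ ->] ->.
apply: (connect_inv (P := fun v => ((v \in W) || (v \in C e)) && (v != x) && connb (Gfx G W e x) y v) _ _ Rz).
2: by rewrite yC orbT yx; apply: connect0.
move=> u v /= /andP [/andP [uWC ux] cu] /andP [uW /adjbP [f]].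
rewrite in_set => /andP [fE /andP [f1 f2]] /= H.
have uC : u \in C e by move: uWC; rewrite (negPf uW).
have fF : f \in F e.
  rewrite FP fE; case/orP: H => /eqP ->; by rewrite uC ?orbT.
have vWC : (v \in W) || (v \in C e) by apply: (Fc_ends eE fF); rewrite /isend; case/orP: H => /eqP -> /=; rewrite eqxx ?orbT.
have vx : v != x by case/orP: H => /eqP H; rewrite H /= in f1 f2.
rewrite vWC vx /=; apply: connect_trans cu (connect1 _); apply/adjbP; exists f => //.
by rewrite in_set fF f1 f2.
Qed.


Lemma mrgW z : z \in W -> mrg a b z = a.
Proof. by rewrite !inE /mrg => /orP [/eqP ->|/eqP ->]; rewrite ?eqxx // (negPf hab). Qed.

Lemma mrg_noW z : z \notin W -> mrg a b z = z.
Proof. by rewrite !inE negb_or /mrg => /andP [_ /negPf ->]. Qed.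

Lemma mrg_ne x z : x != a -> z != x -> mrg a b z != x.
Proof. by rewrite /mrg; case: ifP => // _ xa _; rewrite eq_sym. Qed.

Lemma Reach e x y : e \in gE G -> x \in gV G -> x != a -> y \in C e -> y != x ->
  connb (delv (Pe G a b e) x) y a.
Proof.
move=> eE xV xa yC yx.
have [z zW /andP [zx c]] := RG eE xV yC yx.
have := connb_hom (K1 := Gfx G W e x) (K2 := delv (Pe G a b e) x) (h := mrg a b) _ c.
rewrite mrg_noW ?(C_noW yC) // mrgW //; apply.
move=> u v /adjbP [f]; rewrite in_set => /andP [fF /andP [f1 f2]] H.
apply: connect1; apply/adjbP; exists f.
- by rewrite in_set fF /= !mrg_ne.
- by case/orP: H => /eqP H; rewrite /= H eqxx ?orbT.
Qed.

Lemma Pe_mono e x y z : connb (delv (Pe G a b e) z) x y -> connb (Pe G a b e) x y.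
Proof. by apply: connb_mono => // f; rewrite in_set => /andP []. Qed.

Lemma nonsep_Pe e : e \in gE G -> nonsep (Pe G a b e).
Proof.
move=> eE; case: (eqVneq (C e) set0) => [C0|Cn].
- have F0 : F e = [set e].
    apply/setP => f; rewrite FP C0 !in_set0 !orbF in_set1.
    by case: eqP => [->|]; rewrite ?eE ?andbF.
  apply/and3P; split.
  + rewrite /connected /= C0 setU0; apply/andP; split; first by apply/set0Pn; exists a; rewrite in_set1.
    apply/forallP => x; apply/implyP; rewrite in_set1 => /eqP ->.
    apply/forallP => y; apply/implyP; rewrite in_set1 => /eqP ->; exact: connect0.
  + apply/forallP => v; rewrite /cutv /= C0 setU0; apply/negP => /andP [_ /existsP [x]].
    move=> /andP [xs /existsP [y /andP [ys /andP [_ /negP]]]]; apply; move: xs ys; rewrite !in_setD1 !in_set1 => /andP [_ /eqP ->] /andP [_ /eqP ->]; exact: connect0.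
  + by rewrite /= C0 setU0 F0 !cards1 eqxx orbT.
- have sC := sv_C eE Cn.
  have toA y : y \in a |: C e -> connb (Pe G a b e) y a.
    rewrite in_setU1 => /orP [/eqP ->|yC]; first exact: connect0.
    apply: (@Pe_mono e _ _ b); apply: Reach => //; first by rewrite eq_sym.
    by apply: contraTneq (C_noW yC) => ->; rewrite !inE eqxx orbT.
  apply/and3P; split.
  + apply/andP; split; first by apply/set0Pn; exists a; rewrite in_setU1 eqxx.
    apply/forallP => x; apply/implyP => xV; apply/forallP => y; apply/implyP => yV.
    apply: connb_trans (toA _ xV) _; rewrite connb_sym; exact: toA.
  + apply/forallP => v; apply/negP => /andP [vV /existsP [x /andP [xV /existsP [y /andP [yV /andP [_ /negP]]]]]].
    apply; move: xV yV; rewrite !in_setD1 /= => /andP [xv xV] /andP [yv yV].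
    case/setU1P: vV => [va|vC].
    * subst v.
      have fromS z : z \in C e -> connb (delv (Pe G a b e) a) (sv G W e) z.
        move=> zC; have := zC; rewrite CP => /and3P [_ _ cz].
        have : (z \in C e) && connb (delv (Pe G a b e) a) (sv G W e) z; last by case/andP.
        apply: (connect_inv (P := fun z => (z \in C e) && connb (delv (Pe G a b e) a) (sv G W e) z) _ _ cz).
          move=> u w /andP [uC cu] /and3P [uw uW wW].
          have wC := C_step uC uw wW; rewrite wC /=.
          apply: connect_trans cu (connect1 _).
          case/adjbP: uw => f fE H; apply/adjbP; exists f.
            rewrite in_set /= FP fE.
            have -> : ((gend G f).1 \in C e) || ((gend G f).2 \in C e) by case/orP: H => /eqP ->; rewrite uC ?orbT.
            have ua : u != a by apply: contraNneq uW => ->; rewrite !inE eqxx.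
            have wa : w != a by apply: contraNneq wW => ->; rewrite !inE eqxx.
            by rewrite orbT /=; case/orP: H => /eqP -> /=; rewrite !mrg_noW // ua wa.
          by rewrite /=; case/orP: H => /eqP -> /=; rewrite !mrg_noW // eqxx ?orbT.
        by rewrite sC; apply: connect0.
      move: xV yV; rewrite !in_setU1 (negPf xv) (negPf yv) /= => xC yC.
      apply: connb_trans (fromS _ yC); rewrite connb_sym; exact: fromS.
    * have vV : v \in gV G := C_V vC.
      have va : v != a by apply: contraTneq (C_noW vC) => ->; rewrite !inE eqxx.
      have toA' z : z \in a |: C e -> z != v -> connb (delv (Pe G a b e) v) z a.
        rewrite in_setU1 => /orP [/eqP -> _|zC zv]; first exact: connect0.
        exact: Reach.
      apply: connb_trans (toA' _ xV xv) _; rewrite connb_sym; exact: toA'.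
  + apply/orP; left; apply/forallP => f; apply/implyP => /= fF.
    rewrite /is_loop /=.
    have fE := Fc_edge fF.
    have nl := loopG fE.
    move: fF; rewrite Fc_C // => /andP [_ /orP [h|h]].
    * rewrite (mrg_noW (C_noW h)); case: (boolP ((gend G f).2 \in W)) => [w2|w2].
        by rewrite mrgW //; apply: contraTneq (C_noW h) => ->; rewrite !inE eqxx.
      by rewrite mrg_noW.
    * rewrite (mrg_noW (C_noW h)); case: (boolP ((gend G f).1 \in W)) => [w1|w1].
        by rewrite mrgW //; apply: contraTneq (C_noW h) => <-; rewrite !inE eqxx.
      by rewrite mrg_noW.
Qed.


Lemma GfxP g f z : (g \in gE (Gfx G W f z)) = (g \in F f) && ((gend G g).1 != z) && ((gend G g).2 != z).
Proof. by rewrite /= in_set andbA. Qed.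

Lemma delvP (K : mgraph V E) g z : (g \in gE (delv K z)) = (g \in gE K) && ((gend K g).1 != z) && ((gend K g).2 != z).
Proof. by rewrite /= in_set andbA. Qed.

Lemma W2 z x : z \in W -> z != x -> x \in W -> z = (if x == a then b else a).
Proof.
rewrite !inE => /orP [/eqP ->|/eqP ->] zx /orP [/eqP xa|/eqP xb]; subst x.
- by rewrite eqxx in zx.
- by rewrite eq_sym (negPf hab).
- by rewrite eqxx.
- by rewrite eqxx in zx.
Qed.

Lemma AB f : f \in gE G -> connb (MGraph (gV G) (F f) (gend G)) a b.
Proof.
move=> fE; case: (eqVneq (C f) set0) => [C0|Cn].
- have /andP [w1 w2] := C0_ends fE C0; have nl := loopG fE.
  apply: connect1; apply/adjbP; exists f; first exact: Fc_self.
  rewrite /= [gend G f]surjective_pairing.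
  move: w1 w2 nl; rewrite !inE => /orP [] /eqP -> /orP [] /eqP -> nl; by rewrite ?eqxx ?orbT in nl *.
- have sC := sv_C fE Cn; have sW := C_noW sC.
  have sa : sv G W f != a by apply: contraNneq sW => ->; rewrite !inE eqxx.
  have sb : sv G W f != b by apply: contraNneq sW => ->; rewrite !inE eqxx orbT.
  have mono x y z : connb (Gfx G W f z) x y -> connb (MGraph (gV G) (F f) (gend G)) x y.
    by apply: connb_mono => // g; rewrite in_set => /andP [].
  have [z zW /andP [zx c1]] := RG fE hb sC sb.
  have [z' zW' /andP [zx' c2]] := RG fE ha sC sa.
  move: c1 c2; rewrite (W2 zW zx) ?inE ?eqxx ?orbT // (W2 zW' zx'); last by rewrite !inE eqxx.
  rewrite eqxx eq_sym (negPf hab).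
  move=> /mono c1 /mono c2; apply: (connb_trans (y := sv G W f)); [rewrite connb_sym; exact: c1 | exact: c2].
Qed.

Lemma US_in v (S : {set E}) : (v \in gV (US G W S)) = (v \in W) || [exists f in S, v \in C f].
Proof.
rewrite /= in_setU; congr orb; apply/bigcupP/existsP => [[f fS vC]|[f /andP [fS vC]]]; exists f => //.
by rewrite fS.
Qed.

Lemma nonsep_US (S : {set E}) e1 e2 : S \subset gE G -> (forall f, f \in S -> F f \subset S) ->
  e1 \in S -> e2 \in S -> F e1 != F e2 -> nonsep (US G W S).
Proof.
move=> SE Scl e1S e2S d12.
have SG f : f \in S -> f \in gE G := subsetP SE f.
have monoG f x y z : f \in S -> connb (Gfx G W f z) x y -> connb (delv (US G W S) z) x y.
  move=> fS; apply: connb_mono => // g; rewrite GfxP delvP /= => /andP [/andP [gF ->] ->].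
  by rewrite (subsetP (Scl f fS)).
have monoAB f x : f \in S -> x \notin W -> x \notin C f -> connb (delv (US G W S) x) a b.
  move=> fS xW xC; apply: connb_mono (AB (SG f fS)) => // g gF; rewrite delvP /= (subsetP (Scl f fS)) //=.
  have ne y : isend G g y -> y != x.
    move=> yg; have := Fc_ends (SG f fS) gF yg; case/orP => [yW|yC]; first by apply: contraNneq xW => <-.
    by apply: contraNneq xC => <-.
  by rewrite !ne // /isend eqxx ?orbT.
have monoU x y z : connb (delv (US G W S) z) x y -> connb (US G W S) x y.
  by apply: connb_mono => // g; rewrite in_set => /andP [].
have e1G := SG e1 e1S.
have nocut_from v t : t \in gV (US G W S) :\ v ->
    (forall y, y \in gV (US G W S) :\ v -> connb (delv (US G W S) v) y t) -> ~~ cutv (US G W S) v.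
  move=> tV H; apply/negP => /andP [_ /existsP [x /andP [xV /existsP [y /andP [yV /andP [_ /negP]]]]]].
  apply; apply: connb_trans (H _ xV) _; rewrite connb_sym; exact: H.
have aU : a \in gV (US G W S) by rewrite US_in !inE eqxx.
have bU : b \in gV (US G W S) by rewrite US_in !inE eqxx orbT.
apply/and3P; split.
- apply/andP; split; first by apply/set0Pn; exists a.
  have toA y : y \in gV (US G W S) -> connb (US G W S) y a.
    rewrite US_in => /orP [yW|/existsP [f /andP [fS yC]]].
      move: yW; rewrite !inE => /orP [] /eqP ->; first exact: connect0.
      rewrite connb_sym; apply: connb_mono (AB e1G) => // g /= gF; exact: (subsetP (Scl e1 e1S)).
    have yb : y != b by apply: contraNneq (C_noW yC) => ->; rewrite !inE eqxx orbT.
    have [z zW /andP [zb c]] := RG (SG f fS) hb yC yb.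
    move: c; rewrite (W2 zW zb) ?inE ?eqxx ?orbT // eq_sym (negPf hab) => /(monoG f _ _ _ fS); exact: monoU.
  apply/forallP => x; apply/implyP => xV; apply/forallP => y; apply/implyP => yV.
  apply: connb_trans (toA _ xV) _; rewrite connb_sym; exact: toA.
- apply/forallP => v.
  case: (boolP (v \in gV (US G W S))) => [vV|vV]; last by rewrite /cutv (negPf vV).
  have vV' := vV; rewrite US_in in vV'; case/orP: vV' => [vW|/existsP [f0 /andP [f0S vC]]].
  + set t := if v == a then b else a.
    have tW : t \in W by rewrite /t; case: ifP; rewrite !inE eqxx ?orbT.
    have tv : t != v by rewrite /t; case: (eqVneq v a) => [->|va]; rewrite eq_sym //; move: vW va; rewrite !inE => /orP [] /eqP -> //; rewrite eqxx.
    apply: (nocut_from _ t); first by rewrite in_setD1 tv US_in tW.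
    move=> y; rewrite in_setD1 US_in => /andP [yv /orP [yW|/existsP [f /andP [fS yC]]]].
      by rewrite (W2 yW yv vW) -/t; apply: connect0.
    have vG : v \in gV G by move: vW; rewrite !inE => /orP [] /eqP ->.
    have [z zW /andP [zv c]] := RG (SG f fS) vG yC yv.
    by move: c; rewrite (W2 zW zv vW) -/t => /(monoG f _ _ _ fS).
  + have vW := C_noW vC; have vG := C_V vC.
    have [f1 f1S vf1] : exists2 f1, f1 \in S & v \notin C f1.
      case: (boolP (v \in C e1)) => h1; last by exists e1.
      case: (boolP (v \in C e2)) => h2; last by exists e2.
      by move: d12; rewrite (F_share (SG e1 e1S) (SG f0 f0S) h1 vC) (F_share (SG e2 e2S) (SG f0 f0S) h2 vC) eqxx.
    have va : a != v by apply: contraNneq vW => <-; rewrite !inE eqxx.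
    have ba : connb (delv (US G W S) v) b a by rewrite connb_sym; exact: monoAB f1S vW vf1.
    apply: (nocut_from _ a); first by rewrite in_setD1 va aU.
    move=> y; rewrite in_setD1 US_in => /andP [yv /orP [yW|/existsP [f /andP [fS yC]]]].
      by move: yW; rewrite !inE => /orP [] /eqP ->; [apply: connect0|].
    have [z zW /andP [zv c]] := RG (SG f fS) vG yC yv.
    have c' := monoG f _ _ _ fS c.
    by move: zW c'; rewrite !inE => /orP [] /eqP -> // c'; apply: connb_trans c' ba.
- apply/orP; left; apply/forallP => f; apply/implyP => fS; exact: loopG (SG f fS).
Qed.


Lemma mrg_in e f x : e \in gE G -> f \in F e -> isend G f x -> mrg a b x \in a |: C e.
Proof.
move=> eE fF xf; case/orP: (Fc_ends eE fF xf) => [xW|xC].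
  by rewrite mrgW // setU11.
by rewrite mrg_noW ?(C_noW xC) // in_setU1 xC orbT.
Qed.

Lemma CT (V1 : {set V}) (S : {set E}) : a \in V1 -> S \subset gE G ->
  (forall f, f \in S -> F f \subset S) -> (forall f, f \in S -> C f \subset V1) ->
  nblocks (idv (MGraph V1 S (gend G)) a b) = #|F @: S|.
Proof.
move=> aV SE Scl SC.
have SG f : f \in S -> f \in gE G := subsetP SE f.
rewrite (@nblocks_eq _ _ _ a (fun e => (a |: C e, F e))).
- apply: card_imset_eqrel => x y xS yS.
  rewrite xpair_eqE; case: (eqVneq (F x) (F y)) => [Fxy|nF]; last by rewrite andbF.
  by rewrite (F_inj (SG x xS) (SG y yS) Fxy) eqxx.
- move=> e eS /=; have eE := SG e eS.
  rewrite Fc_self // setU11 !andbT; apply/and3P; split.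
  + apply/subsetP => z; rewrite /= in_setD1 in_setU1 => /orP [/eqP ->|zC].
      by rewrite hab aV.
    rewrite (subsetP (SC e eS)) // andbT.
    by apply: contraNneq (C_noW zC) => ->; rewrite !inE eqxx orbT.
  + exact: Scl.
  + apply/forallP => f; apply/implyP => /= fF.
    by rewrite -!/(mrg a b _) !(mrg_in eE fF) // /isend eqxx ?orbT.
- by move=> e eS; apply: nonsep_Pe (SG e eS).
- move=> e f x eS fS /= H; rewrite in_setU1 => /orP [/eqP ->|xC]; first by rewrite eqxx.
  move=> xa; rewrite FP (SG f fS) /=.
  case/orP: H => /eqP H.
  + have : (gend G f).1 = x by move: H xa; rewrite -/(mrg a b _) /mrg; case: ifP => // _ -> ; rewrite eqxx.
    by move=> ->; rewrite xC orbT.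
  + have : (gend G f).2 = x by move: H xa; rewrite -/(mrg a b _) /mrg; case: ifP => // _ -> ; rewrite eqxx.
    by move=> ->; rewrite xC !orbT.
Qed.


Local Notation classes := (F @: gE G).
Local Notation SQ' := (SQ G [set a; b]).
Local Notation pQ' := (pQ G [set a; b]).

Lemma single_C0 e : e \in gE G -> F e = [set e] -> nonsep (dele G e) -> C e = set0.
Proof.
move=> eE Fe nd; apply/eqP; apply: contraT => Cn.
have sC := sv_C eE Cn; have sV := C_V sC.
have sa : sv G W e != a by apply: contraNneq (C_noW sC) => ->; rewrite !inE eqxx.
case/and3P: nd => /andP [_ /forallP H] _ _.
have := H (sv G W e); rewrite /= sV /= => /forallP /(_ a); rewrite ha /= => c.
have [z /adjbP [g]] := connect_step c sa.
rewrite /= in_setD1 => /andP [ge gE] Hg.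
have : g \in F e by rewrite FP gE; case/orP: Hg => /eqP ->; rewrite sC ?orbT.
by rewrite Fe in_set1 (negPf ge).
Qed.

Lemma contr_count e : e \in gE G -> F e = [set e] ->
  nblocks (idv (dele G e) a b) = #|classes| - 1.
Proof.
move=> eE Fe.
have notF f : f \in gE G -> F f = [set e] -> f = e.
  by move=> fE Ff; have := Fc_self fE; rewrite Ff in_set1 => /eqP.
change (nblocks (idv (MGraph (gV G) (gE G :\ e) (gend G)) a b) = #|classes| - 1).
rewrite CT //; last first.
- by move=> f _; apply/subsetP => z; apply: C_V.
- move=> f; rewrite in_setD1 => /andP [fe fE]; apply/subsetP => g gF.
  rewrite in_setD1 (Fc_edge gF) andbT; apply: contraNneq fe => ge; subst g.
  have [h _] := F_class fE gF; apply/eqP; apply: notF => //; move: (Fc_self fE); rewrite -h Fe.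
  by [].
- exact: subD1set.
have -> : gE G = e |: (gE G :\ e) by rewrite setD1K.
rewrite imsetU1 cardsU1 setU1K ?setD11 //.
case: imsetP => [[f]|_]; last by rewrite add1n subn1.
rewrite in_setD1 => /andP [fe fE] h; exfalso; move: fe; rewrite (notF f fE) ?eqxx //.
by rewrite -h.
Qed.

Lemma vert_cover v : v \in gV G -> v \notin W -> exists2 f, f \in gE G & v \in C f.
Proof.
move=> vV vW.
have va : v != a by apply: contraNneq vW => ->; rewrite !inE eqxx.
have [z /adjbP [f fE H]] := connect_step (connG vV ha) va.
exists f => //; apply: end_C => //.
by rewrite /isend; case/orP: H => /eqP -> /=; rewrite eqxx ?orbT.
Qed.

Lemma SQ_in f (Q : {set {set E}}) : (f \in SQ' Q) = (f \in gE G) && (F f \in Q).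
Proof. by rewrite /SQ in_set. Qed.

Lemma SQ_cl (Q : {set {set E}}) f : f \in SQ' Q -> F f \subset SQ' Q.
Proof.
rewrite SQ_in => /andP [fE fQ]; apply/subsetP => g gF.
have [h _] := F_class fE gF; by rewrite SQ_in (Fc_edge gF) h fQ.
Qed.

Lemma SQ_img (Q : {set {set E}}) : Q \subset classes -> F @: SQ' Q = Q.
Proof.
move=> Qc; apply/setP => X; apply/imsetP/idP => [[f] |XQ].
  by rewrite SQ_in => /andP [_ fQ] ->.
have := subsetP Qc X XQ; case/imsetP => f fE XF; exists f => //.
by rewrite SQ_in fE -XF.
Qed.

Lemma pQ1 v (Q : {set {set E}}) : (v \in (pQ' Q).1) = (v \in W) || [exists f in SQ' Q, v \in C f].
Proof.
rewrite /= in_setU; congr orb; apply/bigcupP/existsP => [[f fS vC]|[f /andP [fS vC]]]; exists f => //.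
by rewrite fS.
Qed.

Lemma pQ_subg (Q : {set {set E}}) : is_subg G (pQ' Q).
Proof.
apply/and3P; split.
- apply/subsetP => v; rewrite pQ1 => /orP [|/existsP [f /andP [_ /C_V]]] //.
  by rewrite !inE => /orP [] /eqP ->.
- by apply/subsetP => f; rewrite /= SQ_in => /andP [].
- apply/forallP => f; apply/implyP => /= fS.
  have fE : f \in gE G by move: fS; rewrite SQ_in => /andP [].
  have H x : isend G f x -> x \in (pQ' Q).1.
    move=> xf; rewrite pQ1; case/orP: (Fc_ends fE (Fc_self fE) xf) => [->//|xC].
    by apply/orP; right; apply/existsP; exists f; rewrite fS.
  by rewrite !H // /isend eqxx ?orbT.
Qed.

Lemma pQ_count (Q : {set {set E}}) : Q \subset classes -> nblocks (idv (subg G (pQ' Q)) a b) = #|Q|.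
Proof.
move=> Qc; rewrite -{2}(SQ_img Qc).
change (nblocks (idv (MGraph (pQ' Q).1 (SQ' Q) (gend G)) a b) = #|F @: SQ' Q|).
apply: CT.
- by rewrite pQ1 !inE eqxx.
- by apply/subsetP => f; rewrite SQ_in => /andP [].
- exact: SQ_cl.
- move=> f fS; apply/subsetP => v vC; rewrite pQ1; apply/orP; right.
  by apply/existsP; exists f; rewrite fS.
Qed.

Lemma two_classes (Q : {set {set E}}) : Q \subset classes -> 2 <= #|Q| ->
  exists e1, exists e2, [/\ e1 \in SQ' Q, e2 \in SQ' Q & F e1 != F e2].
Proof.
move=> Qc c2'; have c2 : 2 <= #|F @: SQ' Q| by rewrite SQ_img.
have [X XQ] : exists X, X \in F @: SQ' Q by apply/set0Pn; rewrite -card_gt0; apply: leq_trans c2.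
have [Y /andP [YX YQ]] : exists Y, (Y != X) && (Y \in F @: SQ' Q).
  apply/existsP; apply: contraTT c2; rewrite negb_exists => /forallP H.
  have : F @: SQ' Q \subset [set X] by apply/subsetP => Z ZQ; have := H Z; rewrite ZQ andbT negbK in_set1.
  by move/subset_leq_card; rewrite cards1 ltnNge => ->.
case/imsetP: XQ => e1 e1S eX; case/imsetP: YQ => e2 e2S eY.
by exists e1, e2; split => //; rewrite -eX -eY eq_sym.
Qed.

Lemma SQ_card2 (Q : {set {set E}}) : Q \subset classes -> 2 <= #|Q| -> 2 <= #|SQ' Q|.
Proof.
move=> Qc c2; have [e1 [e2 [e1S e2S d]]] := two_classes Qc c2.
have e12 : e1 != e2 by apply: contraNneq d => ->.
have -> : 2 = #|[set e1; e2]| by rewrite cards2 e12.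
by apply: subset_leq_card; rewrite subUset !sub1set e1S e2S.
Qed.

Lemma pQ_one (Q : {set {set E}}) : Q \subset classes -> 2 <= #|Q| -> nblocks (subg G (pQ' Q)) = 1.
Proof.
move=> Qc c2; have [e1 [e2 [e1S e2S d]]] := two_classes Qc c2.
apply: nblocks_one.
- by case/and3P: (pQ_subg Q).
- change (nonsep (US G W (SQ' Q))); apply: (nonsep_US (e1 := e1) (e2 := e2)) => //.
  + by apply/subsetP => f; rewrite SQ_in => /andP [].
  + exact: SQ_cl.
- by apply/set0Pn; exists e1.
Qed.

Lemma SQ1 e : e \in gE G -> SQ' [set F e] = F e.
Proof.
move=> eE; apply/setP => f; rewrite SQ_in in_set1; apply/andP/idP => [[fE /eqP <-]|fF].
  exact: Fc_self.
by have [h _] := F_class eE fF; rewrite (Fc_edge fF) h.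
Qed.

Lemma pQ_part (Q1 Q2 : {set {set E}}) : Q1 :|: Q2 = classes -> Q1 :&: Q2 = set0 ->
  [/\ (pQ' Q1).1 :&: (pQ' Q2).1 = W, (pQ' Q1).1 :|: (pQ' Q2).1 = gV G,
      (pQ' Q1).2 :&: (pQ' Q2).2 = set0 & (pQ' Q1).2 :|: (pQ' Q2).2 = gE G].
Proof.
move=> U I.
have disj f g : f \in SQ' Q1 -> g \in SQ' Q2 -> F f != F g.
  rewrite !SQ_in => /andP [_ f1] /andP [_ g2]; apply: contraTneq isT => h.
  have : F f \in Q1 :&: Q2 by rewrite in_setI f1 h g2.
  by rewrite I in_set0.
have inQ f : f \in gE G -> (F f \in Q1) || (F f \in Q2).
  by move=> fE; rewrite -in_setU U; apply: imset_f.
split.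
- apply/setP => v; rewrite in_setI !pQ1.
  case: (boolP (v \in W)) => //= vW; apply/negP => /andP [/existsP [f /andP [fS vf]] /existsP [g /andP [gS vg]]].
  have fE : f \in gE G by move: fS; rewrite SQ_in => /andP [].
  have gE : g \in gE G by move: gS; rewrite SQ_in => /andP [].
  by have := disj f g fS gS; rewrite (F_share fE gE vf vg) eqxx.
- apply/setP => v; rewrite in_setU !pQ1; apply/idP/idP.
  + case/orP => /orP [|/existsP [f /andP [_ /C_V]]] //; by rewrite !inE => /orP [] /eqP ->.
  + move=> vV; case: (boolP (v \in W)) => //= vW.
    have [f fE vf] := vert_cover vV vW.
    case/orP: (inQ f fE) => h; [apply/orP; left | apply/orP; right]; apply/existsP; exists f; by rewrite SQ_in fE h.
- apply/setP => f; rewrite in_setI in_set0; apply/negP => /andP [f1 f2].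
  by have := disj f f f1 f2; rewrite eqxx.
- apply/setP => f; rewrite in_setU /= !SQ_in -andb_orr; case: (boolP (f \in gE G)) => //= fE.
  exact: inQ.
Qed.

End Bridges.


Theorem lemma4p3 (V E : finType) (G : mgraph V E) :
  wfb G -> inPhi G ->
  forall u1 u2 : V, u1 \in gV G -> u2 \in gV G -> u1 != u2 ->
  nblocks (idv G u1 u2) \in [:: 1; 3].
Proof.
move=> wG /and5P [nsG _ Ha Hb Hc] u1 u2 h1 h2 h12.
set W := [set u1; u2].
set k := #|Fc G W @: gE G|.
have Hk : nblocks (idv G u1 u2) = k.
  change (nblocks (idv (MGraph (gV G) (gE G) (gend G)) u1 u2) = k).
  apply: (CT wG nsG h12 h1 h2) => //.
  - by move=> f _; apply/subsetP => g; apply: Fc_edge.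
  - by move=> f _; apply/subsetP => z; apply: C_V.
rewrite Hk.
have lp := loopG nsG h12 h1 h2.
have k1 : 0 < k.
  have [z /adjbP [f fE _]] := connect_step (connG nsG h1 h2) h12.
  by rewrite card_gt0; apply/set0Pn; exists (Fc G W f); apply: imset_f.
have oddlem n : 0 < n -> ~~ odd (n - 1) -> odd n.
  by case: n => // n _; rewrite subSS subn0.
have SE e : e \in gE G -> Fc G W e = [set e] -> odd k.
  move=> eE Fe.
  have nd : nonsep (dele G e) by have := forallP Ha e; rewrite eE.
  have C0 := single_C0 wG h1 eE Fe nd.
  have /andP [w1 w2] := C0_ends wG eE C0.
  have ne := lp e eE.
  have bp : ~~ odd (nblocks (contr G e)) by have := forallP Hb e; rewrite eE.
  move: bp; rewrite /contr /is_loop (negPf ne).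
  move: w1 w2 ne; rewrite !inE => /orP [] /eqP e1 /orP [] /eqP e2; rewrite e1 e2 ?eqxx // => _.
  - rewrite (contr_count wG nsG h12 h1 h2 eE Fe) -/W -/k.
    exact: oddlem.
  - have h21 : u2 != u1 by rewrite eq_sym.
    have Fe' : Fc G [set u2; u1] e = [set e] by rewrite setUC.
    rewrite (contr_count wG nsG h21 h2 h1 eE Fe') setUC -/W -/k.
    exact: oddlem.
have Cp p1 p2 : [&& is_subg G p1, is_subg G p2, 2 <= #|p1.2|, 2 <= #|p2.2|,
         u1 != u2, p1.1 :&: p2.1 == [set u1; u2],
         p1.1 :|: p2.1 == gV G, p1.2 :&: p2.2 == set0 &
         p1.2 :|: p2.2 == gE G] ->
     (odd (nblocks (idv (subg G p1) u1 u2)) == ~~ odd (nblocks (subg G p1)))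
     && (~~ odd (nblocks (subg G p1)) == odd (nblocks (subg G p2))).
  by move=> H; move/forallP: Hc => /(_ p1) /forallP /(_ p2) /forallP /(_ u1) /forallP /(_ u2) /implyP; apply.
have split Q1 Q2 : Q1 :|: Q2 = Fc G W @: gE G -> Q1 :&: Q2 = set0 ->
    2 <= #|SQ G W Q1| -> 2 <= #|SQ G W Q2| ->
    (odd #|Q1| == ~~ odd (nblocks (subg G (pQ G W Q1))))
    && (~~ odd (nblocks (subg G (pQ G W Q1))) == odd (nblocks (subg G (pQ G W Q2)))).
  move=> U I c1 c2.
  have Q1c : Q1 \subset Fc G W @: gE G by rewrite -U subsetUl.
  rewrite -(pQ_count wG nsG h12 h1 h2 Q1c); apply: Cp.
  have [i1 i2 i3 i4] := pQ_part wG nsG h1 h2 U I.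
  by rewrite !pQ_subg // c1 c2 h12 i1 i2 i3 i4 !eqxx.
have [k13|] := boolP ((k == 1) || (k == 3)).
  by rewrite !inE; case/orP: k13 => ->; rewrite ?orbT.
rewrite negb_or => /andP [kn1 kn3]; exfalso.
have [k2|k2] := eqVneq k 2.
- have /cards2P [X [Y [XY cl]]] : #|Fc G W @: gE G| == 2 by rewrite -/k k2.
  have XC : X \in Fc G W @: gE G by rewrite cl !inE eqxx.
  have YC : Y \in Fc G W @: gE G by rewrite cl !inE eqxx orbT.
  case/imsetP: XC => e eE eX; case/imsetP: YC => f fE fY.
  have big e' : e' \in gE G -> (Fc G W e' = [set e']) + (2 <= #|SQ G W [set Fc G W e']|).
    move=> e'E; rewrite (SQ1 u1 u2 wG e'E).
    case: (ltnP 1 #|Fc G W e'|) => [h|h]; [right => // | left].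
    have := Fc_self u1 u2 e'E; rewrite -/W => ein.
    have : #|Fc G W e'| = 1 by apply/eqP; rewrite eqn_leq h card_gt0; apply/set0Pn; exists e'.
    move/eqP/cards1P => [x xe]; move: ein; rewrite xe in_set1 => /eqP ->; by [].
  case: (big e eE) => [Fe|ce]; first by move: (SE e eE Fe); rewrite k2.
  case: (big f fE) => [Ff|cf]; first by move: (SE f fE Ff); rewrite k2.
  have U1 : [set Fc G W e] :|: [set Fc G W f] = Fc G W @: gE G by rewrite cl -eX -fY.
  have I1 : [set Fc G W e] :&: [set Fc G W f] = set0.
    apply/setP => Z; rewrite !inE; apply/negP => /andP [/eqP -> /eqP]; rewrite -eX -fY => /eqP.
    by rewrite (negPf XY).
  have U2 : [set Fc G W f] :|: [set Fc G W e] = Fc G W @: gE G by rewrite setUC.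
  have I2 : [set Fc G W f] :&: [set Fc G W e] = set0 by rewrite setIC.
  have /andP [/eqP s1 /eqP s2] := split _ _ U1 I1 ce cf.
  have /andP [/eqP s3 _] := split _ _ U2 I2 cf ce.
  move: s1 s2 s3; rewrite !cards1 /= => s1; rewrite -s1 => s2.
  by rewrite -s2.
- have k4 : 4 <= k.
    have gen n : 0 < n -> n != 1 -> n != 2 -> n != 3 -> 4 <= n by case: n => [|[|[|[|n]]]].
    exact: gen.
  have clc : Fc G W @: gE G \subset Fc G W @: gE G := subxx _.
  have c2cl : 2 <= #|Fc G W @: gE G| by apply: leq_trans k4.
  have [e1 [e2 [e1S e2S d]]] := two_classes clc c2cl.
  set Q1 := [set Fc G W e1; Fc G W e2].
  set Q2 := (Fc G W @: gE G) :\: Q1.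
  have e1E : e1 \in gE G by move: e1S; rewrite /SQ in_set => /andP [].
  have e2E : e2 \in gE G by move: e2S; rewrite /SQ in_set => /andP [].
  have Q1c : Q1 \subset Fc G W @: gE G by rewrite subUset !sub1set !imset_f.
  have cQ1 : #|Q1| = 2 by rewrite cards2 d.
  have cQ2 : #|Q2| = k - 2 by rewrite cardsDS // cQ1.
  have Q2c : Q2 \subset Fc G W @: gE G := subsetDl _ _.
  have U : Q1 :|: Q2 = Fc G W @: gE G.
    apply/setP => Z; rewrite /Q2 in_setU in_setD.
    by case: (boolP (Z \in Q1)) => //= ZQ; rewrite (subsetP Q1c).
  have I : Q1 :&: Q2 = set0.
    apply/setP => Z; rewrite /Q2 in_setI in_setD in_set0.
    by case: (Z \in Q1).
  have c1 : 2 <= #|SQ G W Q1| by apply: SQ_card2; rewrite ?cQ1.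
  have c2 : 2 <= #|SQ G W Q2| by apply: SQ_card2; rewrite ?cQ2 // leq_subRL // ?(leq_trans _ k4).
  have /andP [_ /eqP] := split _ _ U I c1 c2.
  rewrite (pQ_one wG nsG h12 h1 h2 Q1c) ?cQ1 // (pQ_one wG nsG h12 h1 h2 Q2c) //.
  by rewrite cQ2 leq_subRL // ?(leq_trans _ k4).
Qed.
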